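(* For every ATL*_i formula φ and every concurrent game structure G in which each agent is assigned an equivalence relation on positions, it holds that G ⊨ φ iff G' ⊨ tr(φ).
   Context: ATL*_i is ATL* with imperfect-information, perfect-recall strategies (objective semantics), where each agent a_i has an indistinguishability relation; ⟨⟨A⟩⟩ψ means there are strategies for the agents in A such that ψ holds whatever the other agents do. tr : ATL*_i → SL_i (Strategy Logic with imperfect information) replaces each subformula ⟨⟨A⟩⟩ψ, with A = {a_1,…,a_k} and the remaining agents a_{k+1},…,a_n, by ∃^{o_1}x_1 … ∃^{o_k}x_k ∀^{o_p}x_{k+1} … ∀^{o_p}x_n (a_1,x_1)…(a_n,x_n) tr(ψ). G' is the concurrent game structure with imperfect information obtained from G by interpreting each observation symbol o_i as the equivalence relation of agent a_i in G, and o_p as the identity relation. In SL_i, ∃^o x quantifies over perfect-recall strategies uniform w.r.t. the relation denoted by o, (a,x) binds agent a to strategy x, and ∀^o x = ¬∃^o x ¬. *)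

(* Defs.v *)
From HB Require Import structures.
From mathcomp Require Import all_boot.
Set Implicit Arguments. Unset Strict Implicit. Unset Printing Implicit Defensive.

Record cgs (Ag : finType) (AP : Type) (V Ac : finType) := CGS {
  cgs_move  : V -> (Ag -> Ac) -> V;
  cgs_label : V -> AP -> bool;
  cgs_init  : V;
  cgs_act_ne : inhabited Ac }.

Definition strategy (V Ac : finType) := seq V -> Ac.

Definition uniform (V Ac : finType) (r : rel V) (s : strategy V Ac) : Prop :=
  forall rho rho' : seq V, all2 r rho rho' -> s rho = s rho'.

Definition cur Ag AP (V Ac : finType) (G : cgs Ag AP V Ac) (rho : seq V) : V :=
  last (cgs_init G) rho.

Definition prefix (V : Type) (pi : nat -> V) (k : nat) : seq V := mkseq pi k.+1.

Record cgsi (Ag : finType) (AP : Type) (V Ac : finType) := CGSi {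
  cgsi_base : cgs Ag AP V Ac;
  cgsi_obs : Ag -> rel V;
  cgsi_obs_equiv : forall a, equivalence_rel (cgsi_obs a) }.

Inductive atl_state (Ag : finType) (AP : Type) : Type :=
  | AAtom of AP
  | ANot of atl_state Ag AP
  | AOr of atl_state Ag AP & atl_state Ag AP
  | ACoal of {set Ag} & atl_path Ag AP
with atl_path (Ag : finType) (AP : Type) : Type :=
  | PState of atl_state Ag AP
  | PNot of atl_path Ag AP
  | POr of atl_path Ag AP & atl_path Ag AP
  | PNext of atl_path Ag AP
  | PUntil of atl_path Ag AP & atl_path Ag AP.

Definition atl_out Ag AP (V Ac : finType) (G : cgs Ag AP V Ac) (rho : seq V)
    (A : {set Ag}) (sg : Ag -> strategy V Ac) (pi : nat -> V) : Prop :=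
  (forall k, k < size rho -> pi k = nth (cgs_init G) rho k) /\
  (forall k, size rho <= k.+1 ->
     exists c : Ag -> Ac,
       (forall a, a \in A -> c a = sg a (prefix pi k)) /\
       pi k.+1 = cgs_move G (pi k) c).

(* Objective semantics, perfect recall. *)
Fixpoint atl_sat_s Ag AP (V Ac : finType) (G : cgsi Ag AP V Ac) (rho : seq V)
    (phi : atl_state Ag AP) {struct phi} : Prop :=
  match phi with
  | AAtom p => cgs_label (cgsi_base G) (cur (cgsi_base G) rho) p
  | ANot f => ~ atl_sat_s G rho f
  | AOr f1 f2 => atl_sat_s G rho f1 \/ atl_sat_s G rho f2
  | ACoal A psi =>
      exists sg : Ag -> strategy V Ac,
        (forall a, a \in A -> uniform (cgsi_obs G a) (sg a)) /\
        forall pi, atl_out (cgsi_base G) rho A sg pi ->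
          atl_sat_p G pi (size rho).-1 psi
  end
with atl_sat_p Ag AP (V Ac : finType) (G : cgsi Ag AP V Ac) (pi : nat -> V)
    (i : nat) (psi : atl_path Ag AP) {struct psi} : Prop :=
  match psi with
  | PState f => atl_sat_s G (prefix pi i) f
  | PNot p => ~ atl_sat_p G pi i p
  | POr p1 p2 => atl_sat_p G pi i p1 \/ atl_sat_p G pi i p2
  | PNext p => atl_sat_p G pi i.+1 p
  | PUntil p1 p2 =>
      exists j, i <= j /\ atl_sat_p G pi j p2 /\
        forall k, i <= k < j -> atl_sat_p G pi k p1
  end.

Definition atl_models Ag AP (V Ac : finType) (G : cgsi Ag AP V Ac)
    (phi : atl_state Ag AP) : Prop :=
  atl_sat_s G [:: cgs_init (cgsi_base G)] phi.

Inductive sl_form (Obs Var Ag AP : Type) : Type :=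
  | SLAtom of AP
  | SLNot of sl_form Obs Var Ag AP
  | SLOr of sl_form Obs Var Ag AP & sl_form Obs Var Ag AP
  | SLEx of Obs & Var & sl_form Obs Var Ag AP
  | SLBind of Ag & Var & sl_form Obs Var Ag AP
  | SLNext of sl_form Obs Var Ag AP
  | SLUntil of sl_form Obs Var Ag AP & sl_form Obs Var Ag AP.

Definition SLAll (Obs Var Ag AP : Type) (o : Obs) (x : Var)
    (f : sl_form Obs Var Ag AP) : sl_form Obs Var Ag AP :=
  SLNot (SLEx o x (SLNot f)).

Record cgso (Obs : Type) (Ag : finType) (AP : Type) (V Ac : finType) := CGSo {
  cgso_base : cgs Ag AP V Ac;
  cgso_obs : Obs -> rel V;
  cgso_obs_equiv : forall o, equivalence_rel (cgso_obs o) }.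

Fixpoint sl_out Ag AP (V Ac : finType) (G : cgs Ag AP V Ac)
    (sg : Ag -> strategy V Ac) (rho : seq V) (n : nat) : seq V :=
  match n with
  | 0 => rho
  | n'.+1 => let r := sl_out G sg rho n' in
             rcons r (cgs_move G (cur G r) (fun a => sg a r))
  end.

(* Temporal operators require
   every agent to be bound (otherwise the outcome is undefined in the paper;
   here they are then false), and binding an unbound variable is false. *)
Fixpoint sl_sat (Obs : Type) (Var : eqType) (Ag : finType) AP (V Ac : finType)
    (G : cgso Obs Ag AP V Ac)
    (nv : Var -> option (strategy V Ac)) (na : Ag -> option (strategy V Ac))
    (rho : seq V) (phi : sl_form Obs Var Ag AP) {struct phi} : Prop :=
  match phi with
  | SLAtom p => cgs_label (cgso_base G) (cur (cgso_base G) rho) p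
  | SLNot f => ~ sl_sat G nv na rho f
  | SLOr f1 f2 => sl_sat G nv na rho f1 \/ sl_sat G nv na rho f2
  | SLEx o x f =>
      exists s : strategy V Ac, uniform (cgso_obs G o) s /\
        sl_sat G (fun y => if y == x then Some s else nv y) na rho f
  | SLBind a x f =>
      match nv x with
      | Some s => sl_sat G nv (fun b => if b == a then Some s else na b) rho f
      | None => False
      end
  | SLNext f =>
      exists sg : Ag -> strategy V Ac, (forall a, na a = Some (sg a)) /\
        sl_sat G nv na (sl_out (cgso_base G) sg rho 1) f
  | SLUntil f1 f2 =>
      exists sg : Ag -> strategy V Ac, (forall a, na a = Some (sg a)) /\
        exists i, sl_sat G nv na (sl_out (cgso_base G) sg rho i) f2 /\
          forall j, j < i -> sl_sat G nv na (sl_out (cgso_base G) sg rho j) f1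
  end.

Definition sl_models (Obs : Type) (Var : eqType) (Ag : finType) AP (V Ac : finType)
    (G : cgso Obs Ag AP V Ac) (phi : sl_form Obs Var Ag AP) : Prop :=
  sl_sat G (fun _ => None) (fun _ => None) [:: cgs_init (cgso_base G)] phi.

(* G' : observation symbols  Some a = o_a  (relation of agent a),      *)
(*      None = o_p (identity relation).                                *)
Definition obs_of_agents Ag AP (V Ac : finType) (G : cgsi Ag AP V Ac)
    (o : option Ag) : rel V :=
  match o with
  | Some a => cgsi_obs G a
  | None => fun x y => x == y
  end.

Lemma obs_of_agents_equiv Ag AP (V Ac : finType) (G : cgsi Ag AP V Ac) o :
  equivalence_rel (obs_of_agents G o).
Proof.
case: o => [a|]; first exact: cgsi_obs_equiv.
move=> x y z /=; split; first exact: eqxx.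
by move/eqP->.
Qed.

Definition G' Ag AP (V Ac : finType) (G : cgsi Ag AP V Ac) :
    cgso (option Ag) Ag AP V Ac :=
  CGSo (cgsi_base G) (obs_of_agents_equiv G).

(* Translation tr : ATL*_i -> SL_i.  Variable x_i is the agent a_i     *)
(* itself (Var := Ag), so x_1..x_n are pairwise distinct.              *)
Fixpoint tr_s (Ag : finType) AP (phi : atl_state Ag AP) {struct phi}
    : sl_form (option Ag) Ag Ag AP :=
  match phi with
  | AAtom p => SLAtom _ _ _ p
  | ANot f => SLNot (tr_s f)
  | AOr f1 f2 => SLOr (tr_s f1) (tr_s f2)
  | ACoal A psi =>
      let binds := foldr (fun a f => SLBind a a f) (tr_p psi) (enum Ag) in
      let univ := foldr (fun a f => SLAll None a f) binds
                        [seq a <- enum Ag | a \notin A] in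
      foldr (fun a f => SLEx (Some a) a f) univ [seq a <- enum Ag | a \in A]
  end
with tr_p (Ag : finType) AP (psi : atl_path Ag AP) {struct psi}
    : sl_form (option Ag) Ag Ag AP :=
  match psi with
  | PState f => tr_s f
  | PNot p => SLNot (tr_p p)
  | POr p1 p2 => SLOr (tr_p p1) (tr_p p2)
  | PNext p => SLNext (tr_p p)
  | PUntil p1 p2 => SLUntil (tr_p p1) (tr_p p2)
  end.

(* Main.v *)
Require Import Defs.
From HB Require Import structures.
From mathcomp Require Import all_boot.
From mathcomp Require Import zify.
From Stdlib Require Import Classical ClassicalEpsilon FunctionalExtensionality.
Import Defs.
Set Implicit Arguments. Unset Strict Implicit. Unset Printing Implicit Defensive.

Lemma mkseqS (T : Type) (f : nat -> T) n : mkseq f n.+1 = rcons (mkseq f n) (f n).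
Proof. by rewrite /mkseq -addn1 iotaD map_cat add0n cats1. Qed.

Lemma prefixS (T : Type) (pi : nat -> T) k :
  prefix pi k.+1 = rcons (prefix pi k) (pi k.+1).
Proof. exact: mkseqS. Qed.

Lemma last_prefix (T : Type) (x0 : T) pi k : last x0 (prefix pi k) = pi k.
Proof. by rewrite /prefix mkseqS last_rcons. Qed.

Lemma size_sl_out (Ag : finType) AP (V Ac : finType) (G0 : cgs Ag AP V Ac) sg rho n :
  size (sl_out G0 sg rho n) = size rho + n.
Proof. by elim: n => [|n IH] /=; rewrite ?addn0 // size_rcons IH addnS. Qed.

Lemma sl_out_add (Ag : finType) AP (V Ac : finType) (G0 : cgs Ag AP V Ac) sg rho m n :
  sl_out G0 sg (sl_out G0 sg rho m) n = sl_out G0 sg rho (n + m).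
Proof. by elim: n => [|n IH] //; rewrite addSn /= IH. Qed.

Lemma nth_sl_out (Ag : finType) AP (V Ac : finType) (G0 : cgs Ag AP V Ac) sg rho m n x0 k :
  m <= n -> k < size rho + m ->
  nth x0 (sl_out G0 sg rho n) k = nth x0 (sl_out G0 sg rho m) k.
Proof.
move=> mn km; elim: n mn => [|n IH]; first by rewrite leqn0 => /eqP->.
rewrite leq_eqVlt => /orP[/eqP->//|]; rewrite ltnS => mn.
rewrite /= nth_rcons size_sl_out.
have -> : k < size rho + n by lia.
exact: IH.
Qed.

Definition play (Ag : finType) AP (V Ac : finType) (G0 : cgs Ag AP V Ac) sg
  (rho : seq V) (k : nat) : V :=
  nth (cgs_init G0) (sl_out G0 sg rho (k.+1 - size rho)) k.

Lemma prefix_play (Ag : finType) AP (V Ac : finType) (G0 : cgs Ag AP V Ac) sg x r n :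
  prefix (play G0 sg (x :: r)) (size r + n) = sl_out G0 sg (x :: r) n.
Proof.
apply: (@eq_from_nth _ (cgs_init G0)).
  rewrite size_mkseq size_sl_out /=; lia.
move=> k; rewrite /prefix size_mkseq => hk; rewrite nth_mkseq // /play.
symmetry; apply: nth_sl_out => /=; lia.
Qed.

Lemma play_out (Ag : finType) AP (V Ac : finType) (G0 : cgs Ag AP V Ac)
  (A : {set Ag}) sA t x r :
  (forall a, a \in A -> t a = sA a) -> atl_out G0 (x :: r) A sA (play G0 t (x :: r)).
Proof.
move=> htA; split.
  move=> k hk; rewrite /play.
  have -> : k.+1 - size (x :: r) = 0 by simpl in hk |- *; lia.
  by [].
move=> k hk.
exists (fun a => t a (prefix (play G0 t (x :: r)) k)); split.
  by move=> a /htA ->.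
have [n ->] : exists n, k = size r + n by exists (k - size r); simpl in hk; lia.
have := prefix_play G0 t x r n.+1.
rewrite addnS prefixS prefix_play /= => /rcons_inj [->].
by rewrite /cur -prefix_play last_prefix.
Qed.

Lemma out_profile (Ag : finType) AP (V Ac : finType) (G0 : cgs Ag AP V Ac)
  (A : {set Ag}) sA x r pi :
  atl_out G0 (x :: r) A sA pi ->
  exists sB : Ag -> strategy V Ac, forall n, prefix pi (size r + n) =
    sl_out G0 (fun b => if b \in A then sA b else sB b) (x :: r) n.
Proof.
case=> h1 h2.
have hc : forall k, exists c : Ag -> Ac, size r <= k ->
    (forall a, a \in A -> c a = sA a (prefix pi k)) /\
    pi k.+1 = cgs_move G0 (pi k) c.
  move=> k; case: (leqP (size r) k) => hk.
    by have [c hc] := h2 k hk; exists c.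
  case: (cgs_act_ne G0) => ac; exists (fun _ => ac).
  by move=> h; exfalso; lia.
pose C k := proj1_sig (constructive_indefinite_description _ (hc k)).
have HC k : size r <= k -> (forall a, a \in A -> C k a = sA a (prefix pi k)) /\
    pi k.+1 = cgs_move G0 (pi k) (C k).
  exact: (proj2_sig (constructive_indefinite_description _ (hc k))).
exists (fun b h => C (size h).-1 b).
elim=> [|n IH].
  rewrite addn0 /prefix; apply: (@eq_from_nth _ (cgs_init G0)); first by rewrite size_mkseq.
  move=> k; rewrite size_mkseq => hk; rewrite nth_mkseq // h1 //.
rewrite addnS prefixS IH /=; congr rcons.
have [hA hm] := HC (size r + n) (leq_addr _ _).
rewrite hm /cur -IH last_prefix; congr cgs_move.
apply: functional_extensionality => a.
case: ifP => [/hA //|_]; by rewrite /prefix size_mkseq.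
Qed.

Lemma sat_exs (Ag : finType) AP (V Ac : finType) (O : cgso (option Ag) Ag AP V Ac)
  (l : seq Ag) F nv na rho :
  uniq l ->
  sl_sat O nv na rho (foldr (fun a f => SLEx (Some a) a f) F l) <->
  exists s : Ag -> strategy V Ac,
    (forall a, a \in l -> uniform (cgso_obs O (Some a)) (s a)) /\
    sl_sat O (fun y => if y \in l then Some (s y) else nv y) na rho F.
Proof.
elim: l nv => [|x l IH] nv /=.
  move=> _; have e : forall s : Ag -> strategy V Ac,
     (fun y => if y \in [::] then Some (s y) else nv y) = nv.
    by move=> s; apply: functional_extensionality => y; rewrite in_nil.
  split.
    move=> h; have [ac] := cgs_act_ne (cgso_base O).
    exists (fun _ _ => ac); rewrite (e (fun _ _ => ac)); split => //.
  by case=> s [_]; rewrite (e s).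
case/andP=> xl ul; split.
  case=> s0 [u0 /(IH _ ul)] [s [us hs]].
  exists (fun y => if y == x then s0 else s y); split.
    move=> a; rewrite in_cons; case: eqP => [-> //|_ /= al]; exact: us.
  move: hs; congr sl_sat; apply: functional_extensionality => y.
  rewrite in_cons; case: eqP => [->|_] /=; last by [].
  by rewrite (negbTE xl).
case=> s [us hs]; exists (s x); split; first by apply: us; rewrite in_cons eqxx.
apply/(IH _ ul); exists s; split.
  by move=> a al; apply: us; rewrite in_cons al orbT.
move: hs; congr sl_sat; apply: functional_extensionality => y.
rewrite in_cons; case: eqP => [->|_] /=; last by [].
by case: (x \in l).
Qed.

Lemma sat_alls (Ag : finType) AP (V Ac : finType) (O : cgso (option Ag) Ag AP V Ac)
  (l : seq Ag) F nv na rho :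
  (forall s : strategy V Ac, uniform (cgso_obs O None) s) ->
  sl_sat O nv na rho (foldr (fun a f => SLAll None a f) F l) <->
  forall s : Ag -> strategy V Ac,
    sl_sat O (fun y => if y \in l then Some (s y) else nv y) na rho F.
Proof.
move=> uN; elim: l nv => [|x l IH] nv /=.
  have e : forall s : Ag -> strategy V Ac,
     (fun y => if y \in [::] then Some (s y) else nv y) = nv.
    by move=> s; apply: functional_extensionality => y; rewrite in_nil.
  split; first by move=> h s; rewrite (e s).
  move=> h; have [ac] := cgs_act_ne (cgso_base O).
  by have := h (fun _ _ => ac); rewrite (e (fun _ _ => ac)).
split.
  move=> h s.
  have : sl_sat O (fun y => if y == x then Some (s x) else nv y) na rho
           (foldr (fun a f => SLAll None a f) F l).
    apply: NNPP => hn; apply: h; exists (s x); split => //.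
  move/IH/(_ s); congr sl_sat; apply: functional_extensionality => y.
  rewrite in_cons; case: eqP => [->|_] /=; last by [].
  by case: (x \in l).
move=> h [s0 [_ hn]]; apply: hn; apply/IH => s.
have := h (fun y => if y \in l then s y else s0).
congr sl_sat; apply: functional_extensionality => y.
rewrite in_cons; case: eqP => [->|_] /=.
  by case: (x \in l).
by case: (y \in l).
Qed.

Lemma sat_binds (Ag : finType) AP (V Ac : finType) (O : cgso (option Ag) Ag AP V Ac)
  (l : seq Ag) F (t : Ag -> strategy V Ac) na rho :
  sl_sat O (fun y => Some (t y)) na rho (foldr (fun a f => SLBind a a f) F l) <->
  sl_sat O (fun y => Some (t y)) (fun b => if b \in l then Some (t b) else na b) rho F.
Proof.
elim: l na => [|x l IH] na /=.
  have -> : (fun b => if b \in [::] then Some (t b) else na b) = na.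
    by apply: functional_extensionality => y; rewrite in_nil.
  by [].
rewrite IH.
have -> : (fun b => if b \in l then Some (t b) else if b == x then Some (t x) else na b)
   = (fun b => if b \in x :: l then Some (t b) else na b).
  apply: functional_extensionality => y.
  rewrite in_cons; case: eqP => [->|_] /=; last by [].
  by case: (x \in l).
by [].
Qed.

Lemma uniform_None (Ag : finType) AP (V Ac : finType) (G : cgsi Ag AP V Ac)
  (s : strategy V Ac) : uniform (cgso_obs (G' G) None) s.
Proof.
move=> rho rho' h; congr s; elim: rho rho' h => [|x r IH] [|y r'] //=.
by case/andP=> /eqP -> /IH ->.
Qed.

Lemma sat_coal (Ag : finType) AP (V Ac : finType) (G : cgsi Ag AP V Ac)
  (A : {set Ag}) (psi : atl_path Ag AP) nv na rho :
  sl_sat (G' G) nv na rho (tr_s (ACoal A psi)) <->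
  exists s : Ag -> strategy V Ac,
    (forall a, a \in A -> uniform (cgsi_obs G a) (s a)) /\
    forall sB : Ag -> strategy V Ac,
      sl_sat (G' G) (fun y => Some (if y \in A then s y else sB y))
        (fun b => Some (if b \in A then s b else sB b)) rho (tr_p psi).
Proof.
have e1 : forall (s sB : Ag -> strategy V Ac),
  (fun y => if y \in [seq a <- enum Ag | a \notin A] then Some (sB y)
            else if y \in [seq a <- enum Ag | a \in A] then Some (s y) else nv y)
  = (fun y => Some (if y \in A then s y else sB y)).
  move=> s sB; apply: functional_extensionality => y.
  have me : forall z : Ag, z \in enum Ag by move=> z; rewrite mem_enum.
  by rewrite mem_filter me andbT mem_filter me andbT; case: (y \in A).
have e2 : forall (t : Ag -> strategy V Ac),
  (fun b => if b \in enum Ag then Some (t b) else na b) = (fun b => Some (t b)).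
  by move=> t; apply: functional_extensionality => y; rewrite mem_enum.
rewrite /= sat_exs; last by rewrite filter_uniq // enum_uniq.
split=> -[s [hu hs]]; exists s; split.
- by move=> a aA; apply: hu; rewrite mem_filter aA /= mem_enum.
- move=> sB; move: hs; move/(@sat_alls _ _ _ _ _ _ _ _ _ _ (@uniform_None _ _ _ _ G))/(_ sB).
  rewrite e1; move/(@sat_binds _ _ _ _ _ _ _ (fun y => if y \in A then s y else sB y)).
  by rewrite e2.
- by move=> a; rewrite mem_filter => /andP[aA _]; apply: hu.
- apply/(@sat_alls _ _ _ _ _ _ _ _ _ _ (@uniform_None _ _ _ _ G)) => sB.
  rewrite e1; apply/(@sat_binds _ _ _ _ _ _ _ (fun y => if y \in A then s y else sB y)).
  by rewrite e2.
Qed.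

Scheme atl_state_mind := Induction for atl_state Sort Prop
with atl_path_mind := Induction for atl_path Sort Prop.

Definition Ps (Ag : finType) AP (V Ac : finType) (G : cgsi Ag AP V Ac)
  (phi : atl_state Ag AP) : Prop :=
  forall (rho : seq V) nv na, rho != [::] ->
    (atl_sat_s G rho phi <-> sl_sat (G' G) nv na rho (tr_s phi)).

Definition Pp (Ag : finType) AP (V Ac : finType) (G : cgsi Ag AP V Ac)
  (psi : atl_path Ag AP) : Prop :=
  forall (x : V) r (sg : Ag -> strategy V Ac) pi nv,
    (forall n, prefix pi (size r + n) = sl_out (cgsi_base G) sg (x :: r) n) ->
    forall j, atl_sat_p G pi (size r + j) psi <->
      sl_sat (G' G) nv (fun a => Some (sg a)) (sl_out (cgsi_base G) sg (x :: r) j)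
        (tr_p psi).

Lemma main_s (Ag : finType) AP (V Ac : finType) (G : cgsi Ag AP V Ac) :
  forall phi, Ps G phi.
Proof.
apply: (@atl_state_mind Ag AP (@Ps Ag AP V Ac G) (@Pp Ag AP V Ac G)).
- by move=> p rho nv na _.
- move=> f IH rho nv na hr /=; have := IH rho nv na hr; tauto.
- move=> f1 IH1 f2 IH2 rho nv na hr /=.
  have := IH1 rho nv na hr; have := IH2 rho nv na hr; tauto.
- move=> A psi IH [//|x r] nv na _; split.
  + case=> sA [hu H]; apply/sat_coal; exists sA; split=> // sB.
    pose t := fun b => if b \in A then sA b else sB b.
    apply/(IH x r t (play (cgsi_base G) t (x :: r)) _ (prefix_play _ _ _ _) 0).
    rewrite addn0; apply: H; apply: play_out => a aA.
    by rewrite /t aA.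
  + move/sat_coal=> [s [hu H]]; exists s; split=> // pi hout.
    have [sB hpre] := out_profile hout.
    move: (H sB) => /(IH x r _ pi _ hpre 0).
    by rewrite addn0.
- move=> f IH x r sg pi nv hpre j /=; rewrite hpre; apply: IH.
  by rewrite -size_eq0 size_sl_out.
- move=> p IH x r sg pi nv hpre j /=; have := IH x r sg pi nv hpre j; tauto.
- move=> p1 IH1 p2 IH2 x r sg pi nv hpre j /=.
  have := IH1 x r sg pi nv hpre j; have := IH2 x r sg pi nv hpre j; tauto.
- move=> p IH x r sg pi nv hpre j /=; rewrite -addnS (IH x r sg pi nv hpre j.+1).
  split; first by move=> h; exists sg.
  case=> sg' [e h].
  have ee : sg' = sg.
    by apply: functional_extensionality => a; case: (e a).
  by subst sg'.
- move=> p1 IH1 p2 IH2 x r sg pi nv hpre j /=; split.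
  + case=> j' [hj [h2 h1]]; exists sg; split=> //.
    exists (j' - (size r + j)); rewrite sl_out_add; split.
      apply/(IH2 x r sg pi nv hpre).
      by have -> : size r + (j' - (size r + j) + j) = j' by lia.
    move=> k hk; rewrite sl_out_add; apply/(IH1 x r sg pi nv hpre).
    apply: h1; lia.
  + case=> sg' [e [i [h2 h1]]].
    have ee : sg' = sg.
      by apply: functional_extensionality => a; case: (e a).
    subst sg'.
    exists (size r + (i + j)); split; first by lia.
    split; first by apply/(IH2 x r sg pi nv hpre); rewrite -sl_out_add.
    move=> k hk.
    have [m km] : exists m, k = size r + (m + j) by exists (k - size r - j); lia.
    rewrite km in hk *; apply/(IH1 x r sg pi nv hpre); rewrite -sl_out_add; apply: h1; lia.
Qed.

Theorem proposition2 (Ag : finType) (AP : Type) (V Ac : finType)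
    (G : cgsi Ag AP V Ac) (phi : atl_state Ag AP) :
  atl_models G phi <-> sl_models (G' G) (tr_s phi).
Proof.
exact: (@main_s Ag AP V Ac G phi [:: cgs_init (cgsi_base G)] (fun _ => None)
          (fun _ => None) isT).
Qed.
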